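(* Let $(A,\mathbf{B})$ be a reality-based algebra with positive degree map, let $F$ be its field of definition, let $\chi\in\mathrm{Irr}(A)$, and let $\mathcal{X}$ be a representation of $A$ affording $\chi$. Then the multiplicity $m_\chi$ lies in $F(\chi)$, and for every $b\in\mathbf{B}$ the coefficients of the characteristic polynomial of $\mathcal{X}(b)$ lie in $F(\chi)$.
   Context: A reality-based algebra (RBA) is a pair $(A,\mathbf{B})$ where $A$ is an associative unital $\mathbb{C}$-algebra with a skew-linear involution $*$, $\mathbf{B}=\{b_0=1_A,b_1,\dots,b_{r-1}\}$ is a $*$-invariant basis of $A$, the structure constants $\lambda_{ijk}$ defined by $b_ib_j=\sum_k\lambda_{ijk}b_k$ are real, and for each $i$, $b_i^*$ is the unique $b_j$ with $\lambda_{ij0}\neq0$, and $\lambda_{ii^*0}=\lambda_{i^*i0}>0$. It has a positive degree map if there is a $*$-algebra homomorphism $\delta:A\to\mathbb{C}$ with $\delta(b_i)>0$ for all $i$; $\mathbf{B}$ is taken to be the standard basis, normalized so that the coefficient of $1$ in $b_ib_i^*$ equals $\delta(b_i)$. The field of definition $F$ is the smallest extension of $\mathbb{Q}$ containing all structure constants of the standard basis. $F(\chi)$ is the field generated over $F$ by the values of $\chi$. With $n=\sum_i\delta(b_i)$ and $\tau(\sum_i\alpha_ib_i)=n\alpha_0$, the multiplicities $m_\psi$ are defined by $\tau=\sum_{\psi\in\mathrm{Irr}(A)}m_\psi\psi$. *)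

(* Defs.v *)
From HB Require Import structures.
From mathcomp Require Import all_boot all_order all_algebra.
Set Implicit Arguments. Unset Strict Implicit. Unset Printing Implicit Defensive.
Import Order.TTheory GRing.Theory Num.Theory.
Local Open Scope ring_scope.

(* A reality-based algebra of dimension r+1 over an algebraically closed
   numeric field C (e.g. the complex numbers), given by its basis
   b_0 = 1, b_1, ..., b_r and its structure constants
   b_i b_j = \sum_k lam i j k b_k.  The involution * is the skew-linear
   anti-automorphism sending b_i to b_(star i). *)
Definition is_RBA (C : numClosedFieldType) (r : nat)
    (lam : 'I_r.+1 -> 'I_r.+1 -> 'I_r.+1 -> C) (star : 'I_r.+1 -> 'I_r.+1) : Prop :=
  (forall i j k, lam i j k \is Num.real) /\
  (forall j k, lam ord0 j k = (j == k)%:R) /\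
  (forall i k, lam i ord0 k = (i == k)%:R) /\
  (forall i j k m, \sum_l lam i j l * lam l k m = \sum_l lam j k l * lam i l m) /\
  involutive star /\
  (* (b_i b_j)^* = b_j^* b_i^* *)
  (forall i j k, lam (star j) (star i) (star k) = lam i j k) /\
  (forall i j, lam i j ord0 != 0 <-> j = star i) /\
  (forall i, lam i (star i) ord0 = lam (star i) i ord0 /\ 0 < lam i (star i) ord0).

(* positive degree map: a *-algebra homomorphism A -> C, positive on B *)
Definition is_pos_degree_map (C : numClosedFieldType) (r : nat)
    (lam : 'I_r.+1 -> 'I_r.+1 -> 'I_r.+1 -> C) (star : 'I_r.+1 -> 'I_r.+1)
    (delta : 'I_r.+1 -> C) : Prop :=
  delta ord0 = 1 /\
  (forall i j, delta i * delta j = \sum_k lam i j k * delta k) /\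
  (forall i, delta (star i) = (delta i)^*) /\
  (forall i, 0 < delta i).

Definition is_standard (C : numClosedFieldType) (r : nat)
    (lam : 'I_r.+1 -> 'I_r.+1 -> 'I_r.+1 -> C) (star : 'I_r.+1 -> 'I_r.+1)
    (delta : 'I_r.+1 -> C) : Prop :=
  forall i, lam i (star i) ord0 = delta i.

(* a (unital) matrix representation of A of degree d, given by X i = X(b_i) *)
Definition is_rep (C : numClosedFieldType) (r : nat)
    (lam : 'I_r.+1 -> 'I_r.+1 -> 'I_r.+1 -> C) (d : nat)
    (X : 'I_r.+1 -> 'M[C]_d) : Prop :=
  X ord0 = 1%:M /\ (forall i j, X i *m X j = \sum_k lam i j k *: X k).

Definition is_irr_rep (C : numClosedFieldType) (r : nat) (d : nat)
    (X : 'I_r.+1 -> 'M[C]_d) : Prop :=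
  (0 < d)%N /\
  (forall U : 'M[C]_d, (forall i, stablemx U (X i)) ->
     \rank U = 0%N \/ \rank U = d).

Definition is_irr_char (C : numClosedFieldType) (r : nat)
    (lam : 'I_r.+1 -> 'I_r.+1 -> 'I_r.+1 -> C) (chi : 'I_r.+1 -> C) : Prop :=
  exists d (X : 'I_r.+1 -> 'M[C]_d),
    is_rep lam X /\ is_irr_rep X /\ forall i, chi i = \tr (X i).

Definition in_field_gen (C : fieldType) (S : C -> Prop) (x : C) : Prop :=
  forall K : {pred C}, GRing.divring_closed K ->
    (forall y, S y -> y \in K) -> x \in K.

Definition F_gens (C : numClosedFieldType) (r : nat)
    (lam : 'I_r.+1 -> 'I_r.+1 -> 'I_r.+1 -> C) : C -> Prop :=
  fun x => exists i j k, x = lam i j k.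

Definition Fchi_gens (C : numClosedFieldType) (r : nat)
    (lam : 'I_r.+1 -> 'I_r.+1 -> 'I_r.+1 -> C) (chi : 'I_r.+1 -> C) : C -> Prop :=
  fun x => F_gens lam x \/ exists i, x = chi i.

Definition tau (C : numClosedFieldType) (r : nat) (delta : 'I_r.+1 -> C)
    (i : 'I_r.+1) : C :=
  (\sum_j delta j) * (i == ord0)%:R.

(* Main.v *)
Require Import Defs.
From HB Require Import structures.
From mathcomp Require Import all_boot all_order all_algebra.
From mathcomp Require Import ring zify.
Import Order.TTheory GRing.Theory Num.Theory.
Local Open Scope ring_scope.
Set Implicit Arguments. Unset Strict Implicit. Unset Printing Implicit Defensive.


Lemma K1 {C : fieldType} {K : {pred C}} (HK : GRing.divring_closed K) : 1 \in K.
Proof. by case: HK. Qed.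
Lemma KB {C : fieldType} {K : {pred C}} (HK : GRing.divring_closed K) x y :
  x \in K -> y \in K -> x - y \in K.
Proof. by case: HK => _ H _; apply: H. Qed.
Lemma Kdiv {C : fieldType} {K : {pred C}} (HK : GRing.divring_closed K) x y :
  x \in K -> y \in K -> x / y \in K.
Proof. by case: HK => _ _ H; apply: H. Qed.
Lemma K0 {C : fieldType} {K : {pred C}} (HK : GRing.divring_closed K) : 0 \in K.
Proof. by rewrite -(subrr 1) (KB HK) ?(K1 HK). Qed.
Lemma KN {C : fieldType} {K : {pred C}} (HK : GRing.divring_closed K) x :
  x \in K -> - x \in K.
Proof. by move=> Hx; rewrite -sub0r (KB HK) ?(K0 HK). Qed.
Lemma KD {C : fieldType} {K : {pred C}} (HK : GRing.divring_closed K) x y :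
  x \in K -> y \in K -> x + y \in K.
Proof. by move=> Hx Hy; rewrite -(opprK y) (KB HK) ?(KN HK). Qed.
Lemma KV {C : fieldType} {K : {pred C}} (HK : GRing.divring_closed K) x :
  x \in K -> x^-1 \in K.
Proof. by move=> Hx; rewrite -div1r (Kdiv HK) ?(K1 HK). Qed.
Lemma KM {C : fieldType} {K : {pred C}} (HK : GRing.divring_closed K) x y :
  x \in K -> y \in K -> x * y \in K.
Proof. by move=> Hx Hy; rewrite -(invrK y) (Kdiv HK) ?(KV HK). Qed.
Lemma Knat {C : fieldType} {K : {pred C}} (HK : GRing.divring_closed K) n :
  n%:R \in K.
Proof. by elim: n => [|n IH]; rewrite ?(K0 HK) // -addn1 natrD (KD HK) ?(K1 HK). Qed.
Lemma Ksum {C : fieldType} {K : {pred C}} (HK : GRing.divring_closed K)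
  (I : Type) (s : seq I) (P : pred I) (F : I -> C) :
  (forall i, P i -> F i \in K) -> \sum_(i <- s | P i) F i \in K.
Proof. move=> H; elim/big_ind: _ => //; [exact: (K0 HK) | exact: (KD HK)]. Qed.

Lemma telescope (R : comNzRingType) (u : nat -> R) x k m :
  \sum_(j < m) (u (k + j)%N - x * u (k + j).+1) * x ^+ j = u k - x ^+ m * u (k + m)%N.
Proof.
elim: m => [|m IH]; first by rewrite big_ord0 expr0 mul1r addn0 subrr.
rewrite big_ord_recr /= IH addnS exprS; ring.
Qed.

Lemma newton (R : comNzRingType) (d : nat) (p : {poly R}) (z : 'I_d -> R)
    (q : 'I_d -> {poly R}) :
  size p = d.+1 -> (forall i, p = ('X - (z i)%:P) * q i) ->
  p^`() = \sum_i q i ->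
  forall k, (k <= d)%N ->
  \sum_(j < d.+1 - k) p`_(k + j) * (\sum_i z i ^+ j) = p`_k *+ k.
Proof.
move=> Hs Hq Hd k Hk.
have qd i : (q i)`_d = 0.
  have [->|q0] := eqVneq (q i) 0; first by rewrite coef0.
  have := Hs; rewrite (Hq i) size_monicM ?monicXsubC // size_XsubC /= => [[Hs']].
  by rewrite nth_default // -Hs' add0n.
have coefp i j : p`_j = ('X * q i)`_j - z i * ('X * q i)`_j.+1.
  by rewrite {1}(Hq i) mulrBl coefB coefCM !coefXM.
transitivity (\sum_i ('X * q i)`_k).
  under eq_bigr => j _ do rewrite mulr_sumr.
  rewrite exchange_big /=; apply: eq_bigr => i _.
  under eq_bigr => j _ do rewrite (coefp i).
  rewrite telescope subnKC; last by apply: leqW.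
  by rewrite [X in _ - _ * X]coefXM /= qd mulr0 subr0.
rewrite -coef_sum -mulr_sumr -Hd coefXM.
case: k Hk => [|k] Hk; first by rewrite mulr0n.
by rewrite coef_deriv.
Qed.

Lemma newton_K (R : numFieldType) (K : {pred R}) (HK : GRing.divring_closed K)
    (d : nat) (p : {poly R}) (z : 'I_d -> R) (q : 'I_d -> {poly R}) :
  size p = d.+1 -> p`_d = 1 -> (forall i, p = ('X - (z i)%:P) * q i) ->
  p^`() = \sum_i q i -> (forall j, \sum_i z i ^+ j \in K) ->
  forall k, p`_k \in K.
Proof.
move=> Hs Hl Hq Hd Hz.
suff H : forall n k, (d - k <= n)%N -> p`_k \in K.
  move=> k; move: (H (d - k)%N k (leqnn _)). done.
elim=> [|n IH] k.
  rewrite leqn0 subn_eq0 leq_eqVlt => /orP[/eqP<-|lt]; first by rewrite Hl (K1 HK).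
  by rewrite nth_default ?(K0 HK) // Hs.
rewrite leq_eqVlt => /orP[/eqP Hdk|]; last by rewrite ltnS; apply: IH.
have kd : (k < d)%N by rewrite -subn_gt0 Hdk.
have := newton Hs Hq Hd (ltnW kd).
rewrite subSn ?(ltnW kd) // Hdk big_ord_recl /= addn0.
under eq_bigr do rewrite expr0.
rewrite sumr_const card_ord.
set S := \sum_(i < n.+1) _.
move=> E.
have SK : S \in K.
  apply: (Ksum HK) => j _; apply: (KM HK); last by apply: Hz.
  apply: IH; rewrite /bump /=; lia.
have nz : (d - k)%:R != 0 :> R by rewrite pnatr_eq0 -lt0n subn_gt0.
have e : p`_k * (d - k)%:R = - S.
  rewrite natrB ?(ltnW kd) // mulrBr; move: E; rewrite -(mulr_natr p`_k k) => <-; ring.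
by rewrite -[p`_k](mulfK nz) e (Kdiv HK) ?(KN HK) ?(Knat HK).
Qed.


Lemma prod_neq_recr (R : comNzRingType) n (f : 'I_n.+1 -> R) (i : 'I_n) :
  \prod_(j < n.+1 | j != widen_ord (leqnSn n) i) f j =
  (\prod_(j < n | j != i) f (widen_ord (leqnSn n) j)) * f ord_max.
Proof.
rewrite big_mkcond big_ord_recr /=.
have -> : (ord_max != widen_ord (leqnSn n) i) by rewrite -val_eqE /= neq_ltn ltn_ord orbT.
congr (_ * _); rewrite [in RHS]big_mkcond; apply: eq_bigr => j _.
by rewrite -val_eqE /= val_eqE.
Qed.

Lemma deriv_prod (R : comNzRingType) n (f : 'I_n -> {poly R}) :
  (\prod_i f i)^`() = \sum_i (f i)^`() * \prod_(j | j != i) f j.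
Proof.
elim: n f => [|n IH] f; first by rewrite big_ord0 big_ord0 derivC.
rewrite big_ord_recr derivM IH /= big_ord_recr /=.
under [X in _ = X + _]eq_bigr do rewrite prod_neq_recr.
congr (_ + _); first by rewrite mulr_suml; apply: eq_bigr => i _; rewrite mulrA.
rewrite mulrC; congr (_ * _).
rewrite [RHS]big_mkcond big_ord_recr /= eqxx mulr1; apply: eq_bigr => j _.
by rewrite ifT // -val_eqE /= neq_ltn ltn_ord.
Qed.

Lemma char_poly_conj (R : fieldType) n (A P : 'M[R]_n) :
  P \in unitmx -> char_poly (P *m A *m invmx P) = char_poly A.
Proof.
move=> Pu; rewrite /char_poly /char_poly_mx.
set mP := map_mx polyC P; set mQ := map_mx polyC (invmx P).
have PQ : mP *m mQ = 1%:M by rewrite -map_mxM mulmxV // map_mx1.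
have -> : 'X%:M - map_mx polyC (P *m A *m invmx P) =
          mP *m ('X%:M - map_mx polyC A) *m mQ.
  rewrite !map_mxM -/mP -/mQ mulmxBr mulmxBl mul_mx_scalar -scalemxAl PQ.
  by rewrite scalemx1.
have QP : mQ *m mP = 1%:M by rewrite -map_mxM mulVmx // map_mx1.
by rewrite !det_mulmx mulrC mulrA -det_mulmx QP det1 mul1r.
Qed.

Lemma trig_mul (R : comNzRingType) n (B T : 'M[R]_n) :
  is_trig_mx B -> is_trig_mx T ->
  is_trig_mx (B *m T) /\ forall i, (B *m T) i i = B i i * T i i.
Proof.
move=> /is_trig_mxP HB /is_trig_mxP HT; split.
  apply/is_trig_mxP => i l il; rewrite mxE big1 // => k _.
  case: (ltnP i k) => ik; first by rewrite HB // mul0r.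
  by rewrite HT ?mulr0 // (leq_ltn_trans ik il).
move=> i; rewrite mxE (bigD1 i) //= big1 ?addr0 // => k ki.
case: (ltngtP i k) => ik; first by rewrite HB // mul0r.
  by rewrite HT ?mulr0.
by move: ki; rewrite -val_eqE /= ik eqxx.
Qed.

Lemma trig_pow (R : comNzRingType) n (T : 'M[R]_n) : is_trig_mx T ->
  forall j, is_trig_mx (T ^+ j) /\ forall i, (T ^+ j) i i = T i i ^+ j.
Proof.
move=> HT; elim=> [|j [IH1 IH2]].
  split; last by move=> i; rewrite expr0 mxE eqxx.
  by apply/is_trig_mxP => i l il; rewrite expr0 mxE -val_eqE /= (ltn_eqF il).
rewrite exprSr -mulmxE; have [H1 H2] := trig_mul IH1 HT.
by split => // i; rewrite H2 IH2 exprSr.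
Qed.

Lemma conj_pow (R : fieldType) n (A P : 'M[R]_n) : P \in unitmx ->
  forall j, (P *m A *m invmx P) ^+ j = P *m A ^+ j *m invmx P.
Proof.
move=> Pu; elim=> [|j IH]; first by rewrite !expr0 mulmx1 mulmxV.
rewrite exprSr IH -mulmxE !mulmxA mulmxKV // exprSr -mulmxE !mulmxA.
by [].
Qed.

Lemma charpoly_K (C : numClosedFieldType) (K : {pred C})
    (HK : GRing.divring_closed K) n (A : 'M[C]_n) :
  (forall j, \tr (A ^+ j) \in K) -> forall k, (char_poly A)`_k \in K.
Proof.
case: n A => [|m] A HA k.
  have /monicP := char_poly_monic A; rewrite lead_coefE size_char_poly /= => H1.
  by case: k => [|k]; rewrite ?H1 ?(K1 HK) // nth_default ?(K0 HK) // size_char_poly.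
have [P Pu HT] := Schur A (ltn0Sn m).
have Pu' := unitarymx_unit Pu.
move: HT; rewrite /similar_to /= conjumx // => HT.
rewrite -(char_poly_conj A Pu').
set T := P *m A *m invmx P in HT *.
apply: (newton_K HK (d := m.+1) (z := fun i => T i i)
  (q := fun i => \prod_(j | j != i) ('X - (T j j)%:P))).
- exact: size_char_poly.
- by have /monicP := char_poly_monic T; rewrite lead_coefE size_char_poly.
- by move=> i; rewrite char_poly_trig // (bigD1 i).
- rewrite char_poly_trig // deriv_prod; apply: eq_bigr => i _.
  by rewrite derivXsubC mul1r.
- move=> j; have [_ H2] := trig_pow HT j.
  have <- : \tr (T ^+ j) = \sum_i T i i ^+ j.
    by rewrite /mxtrace; apply: eq_bigr => i _; rewrite H2.
  by rewrite /T conj_pow // mxtrace_mulC mulmxA mulVmx // mul1mx.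
Qed.


Lemma star0 {C : numClosedFieldType} {r : nat}
    {lam : 'I_r.+1 -> 'I_r.+1 -> 'I_r.+1 -> C} {star : 'I_r.+1 -> 'I_r.+1} :
  is_RBA lam star -> star ord0 = ord0.
Proof.
move=> [_ [H0 [_ [_ [_ [_ [Hz _]]]]]]].
by apply/esym/(Hz ord0 ord0); rewrite H0 eqxx oner_neq0.
Qed.

Lemma lam0 {C : numClosedFieldType} {r : nat}
    {lam : 'I_r.+1 -> 'I_r.+1 -> 'I_r.+1 -> C} {star : 'I_r.+1 -> 'I_r.+1}
    {delta : 'I_r.+1 -> C} :
  is_RBA lam star -> is_standard lam star delta ->
  forall i j, lam i j ord0 = if j == star i then delta i else 0.
Proof.
move=> [_ [_ [_ [_ [_ [_ [Hz _]]]]]]] Hs i j.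
case: eqP => [->|ne]; first exact: Hs.
by apply/eqP; apply: contraT => /(Hz i j).
Qed.

Lemma dstar {C : numClosedFieldType} {r : nat}
    {lam : 'I_r.+1 -> 'I_r.+1 -> 'I_r.+1 -> C} {star : 'I_r.+1 -> 'I_r.+1}
    {delta : 'I_r.+1 -> C} :
  is_RBA lam star -> is_standard lam star delta ->
  forall i, delta (star i) = delta i.
Proof.
move=> [_ [_ [_ [_ [Hinv [_ [_ Hp]]]]]]] Hs i.
by rewrite -Hs Hinv -(Hp i).1 Hs.
Qed.

Lemma lamA {C : numClosedFieldType} {r : nat}
    {lam : 'I_r.+1 -> 'I_r.+1 -> 'I_r.+1 -> C} {star : 'I_r.+1 -> 'I_r.+1}
    {delta : 'I_r.+1 -> C} :
  is_RBA lam star -> is_standard lam star delta ->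
  forall i j k, lam i j k * delta k = lam j (star k) (star i) * delta i.
Proof.
move=> HR Hs i j k; have := HR => [[_ [_ [_ [Has [Hinv _]]]]]].
have := Has i j (star k) ord0.
rewrite (bigD1 k) //= big1; last first.
  move=> l lk; rewrite (lam0 HR Hs) (inj_eq (inv_inj Hinv)) eq_sym (negbTE lk).
  by rewrite mulr0.
rewrite (bigD1 (star i)) //= [X in _ = _ + X]big1; last first.
  by move=> l li; rewrite (lam0 HR Hs) (negbTE li) mulr0.
by rewrite !addr0 !(lam0 HR Hs) !eqxx.
Qed.

Lemma intertwine {C : numClosedFieldType} {r : nat}
    {lam : 'I_r.+1 -> 'I_r.+1 -> 'I_r.+1 -> C} {star : 'I_r.+1 -> 'I_r.+1}
    {delta : 'I_r.+1 -> C} :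
  is_RBA lam star -> is_pos_degree_map lam star delta -> is_standard lam star delta ->
  forall d1 d2 (X1 : 'I_r.+1 -> 'M[C]_d1) (X2 : 'I_r.+1 -> 'M[C]_d2),
  is_rep lam X1 -> is_rep lam X2 -> forall (M : 'M[C]_(d1, d2)) j,
  X1 j *m (\sum_i (delta i)^-1 *: (X1 (star i) *m M *m X2 i)) =
  (\sum_i (delta i)^-1 *: (X1 (star i) *m M *m X2 i)) *m X2 j.
Proof.
move=> HR Hd Hs d1 d2 X1 X2 [_ H1] [_ H2] M j.
have Hinv : involutive star by case: HR => _ [_ [_ [_ [H _]]]].
have dnz i : delta i != 0 by case: Hd => _ [_ [_ H]]; rewrite gt_eqF.
have -> : X1 j *m (\sum_i (delta i)^-1 *: (X1 (star i) *m M *m X2 i)) =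
   \sum_u \sum_v ((delta v)^-1 * lam j (star v) u) *: (X1 u *m M *m X2 v).
  rewrite exchange_big /= mulmx_sumr; apply: eq_bigr => v _.
  rewrite -scalemxAr !mulmxA H1 !mulmx_suml scaler_sumr; apply: eq_bigr => u _.
  by rewrite -!scalemxAl scalerA.
have -> : (\sum_i (delta i)^-1 *: (X1 (star i) *m M *m X2 i)) *m X2 j =
   \sum_u \sum_v ((delta u)^-1 * lam (star u) j v) *: (X1 u *m M *m X2 v).
  rewrite mulmx_suml (reindex_inj (inv_inj Hinv)) /=; apply: eq_bigr => u _.
  rewrite -scalemxAl -!mulmxA H2 !mulmx_sumr scaler_sumr; apply: eq_bigr => v _.
  by rewrite -!scalemxAr scalerA Hinv (dstar HR Hs) !mulmxA.
apply: eq_bigr => u _; apply: eq_bigr => v _; congr (_ *: _).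
have := lamA HR Hs (star u) j v; rewrite Hinv (dstar HR Hs) => E.
apply: (mulfI (dnz u)); apply: (mulIf (dnz v)).
have du := dnz u; have dv := dnz v.
rewrite -[LHS]/(delta u * ((delta v)^-1 * lam j (star v) u) * delta v).
transitivity (lam j (star v) u * delta u); first by field.
rewrite -E; field.
by [].
Qed.

Lemma schur_lem {C : numClosedFieldType} {r : nat} d1 d2
    (X1 : 'I_r.+1 -> 'M[C]_d1) (X2 : 'I_r.+1 -> 'M[C]_d2) :
  is_irr_rep X1 -> is_irr_rep X2 -> forall E : 'M[C]_(d1, d2),
  (forall j, X1 j *m E = E *m X2 j) ->
  E = 0 \/ (forall j, \tr (X1 j) = \tr (X2 j)).
Proof.
move=> [d1p I1] [d2p I2] E HE.
have [/eqP r0|rn0] := eqVneq (\rank E) 0%N; first by left; apply/eqP; rewrite -mxrank_eq0.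
right.
have rE : \rank E = d2.
  have : forall i, stablemx <<E>>%MS (X2 i).
    by move=> i; rewrite (eqmxMr _ (genmxE E)) genmxE -HE submxMl.
  move=> /I2; rewrite genmxE => -[H|//].
  by rewrite H eqxx in rn0.
have rK : \rank (kermx E) = (d1 - d2)%N.
  by rewrite mxrank_ker rE.
have : forall i, stablemx (kermx E) (X1 i).
  move=> i; apply/sub_kermxP; rewrite -mulmxA HE mulmxA mulmx_ker mul0mx //.
move=> /I1; rewrite rK => Hk.
have le1 : (d2 <= d1)%N by rewrite -rE rank_leq_row.
have Hd : d1 = d2 by case: Hk; lia.
subst d2.
have Eu : E \in unitmx by rewrite -row_free_unit /row_free rE.
move=> j; have := HE j => /(congr1 (mulmx (invmx E))).
rewrite mulKmx // => <-; rewrite mxtrace_mulC -mulmxA. by rewrite mulmxV // mulmx1.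
Qed.

Lemma delta_entry {R : comNzRingType} m n k l (A : 'M[R]_(m, n)) (B : 'M[R]_(k, l)) p q s t :
  (A *m delta_mx p q *m B) s t = A s p * B q t.
Proof.
rewrite mxE (bigD1 q) //= big1 ?addr0; last first.
  move=> u uq; rewrite mxE big1 ?mul0r // => v _; rewrite mxE.
  by rewrite (negbTE uq) andbF mulr0.
rewrite mxE (bigD1 p) //= big1 ?addr0; last first.
  by move=> v vp; rewrite mxE (negbTE vp) mulr0.
by rewrite mxE !eqxx mulr1.
Qed.

Lemma ortho {C : numClosedFieldType} {r : nat}
    {lam : 'I_r.+1 -> 'I_r.+1 -> 'I_r.+1 -> C} {star : 'I_r.+1 -> 'I_r.+1}
    {delta : 'I_r.+1 -> C} :
  is_RBA lam star -> is_pos_degree_map lam star delta -> is_standard lam star delta ->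
  forall d1 d2 (X1 : 'I_r.+1 -> 'M[C]_d1) (X2 : 'I_r.+1 -> 'M[C]_d2),
  is_rep lam X1 -> is_rep lam X2 -> is_irr_rep X1 -> is_irr_rep X2 ->
  ~ (forall j, \tr (X1 j) = \tr (X2 j)) ->
  \sum_i (delta i)^-1 * \tr (X1 (star i)) * \tr (X2 i) = 0.
Proof.
move=> HR Hd Hs d1 d2 X1 X2 R1 R2 I1 I2 Hne.
have HE p q : \sum_i (delta i)^-1 *: (X1 (star i) *m delta_mx p q *m X2 i) = 0.
  have [//|H] := schur_lem I1 I2 (intertwine HR Hd Hs R1 R2 (delta_mx p q)).
  by case: (Hne H).
transitivity (\sum_p \sum_q
   (\sum_i (delta i)^-1 *: (X1 (star i) *m delta_mx p q *m X2 i)) p q); last first.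
  by rewrite big1 // => p _; rewrite big1 // => q _; rewrite HE mxE.
apply/esym.
have e p q : (\sum_i (delta i)^-1 *: (X1 (star i) *m delta_mx p q *m X2 i)) p q
   = \sum_i (delta i)^-1 * (X1 (star i) p p * X2 i q q).
  by rewrite summxE; apply: eq_bigr => i _; rewrite mxE delta_entry.
under eq_bigr do under eq_bigr do rewrite e.
rewrite exchange_big /=; under eq_bigr do rewrite exchange_big /=.
rewrite exchange_big /=; apply: eq_bigr => i _.
rewrite /mxtrace mulr_sumr; apply: eq_bigr => q _; rewrite mulr_sumr mulr_suml.
apply: eq_bigr => p _; ring.
Qed.


Lemma rep_pow (C : numClosedFieldType) (r : nat)
    (lam : 'I_r.+1 -> 'I_r.+1 -> 'I_r.+1 -> C) (d : nat) (X : 'I_r.+1 -> 'M[C]_d)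
    (K : {pred C}) (HK : GRing.divring_closed K) :
  is_rep lam X -> (forall i j k, lam i j k \in K) ->
  forall b j, exists c : 'I_r.+1 -> C,
    (forall k, c k \in K) /\ X b ^+ j = \sum_k c k *: X k.
Proof.
move=> [X0 XM] HL b; elim=> [|j [c [cK Hc]]].
  exists (fun k => (k == ord0)%:R); split => [k|]; first exact: Knat.
  rewrite (bigD1 ord0) //= big1 ?addr0; last by move=> k /negbTE ->; rewrite scale0r.
  by rewrite scale1r X0 expr0.
exists (fun l => \sum_k c k * lam k b l); split.
  by move=> l; apply: (Ksum HK) => k _; apply: (KM HK).
rewrite exprSr Hc -mulmxE mulmx_suml.
under eq_bigr do rewrite -scalemxAl XM scaler_sumr.
rewrite exchange_big /=; apply: eq_bigr => l _.
by rewrite scaler_suml; apply: eq_bigr => k _; rewrite scalerA.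
Qed.


Unset Implicit Arguments. Set Strict Implicit.

Theorem lemma2 (C : numClosedFieldType) (r : nat)
    (lam : 'I_r.+1 -> 'I_r.+1 -> 'I_r.+1 -> C) (star : 'I_r.+1 -> 'I_r.+1)
    (delta : 'I_r.+1 -> C)
    (HRBA : is_RBA lam star)
    (Hdeg : is_pos_degree_map lam star delta)
    (Hstd : is_standard lam star delta)
    (N : nat) (psi : 'I_N -> 'I_r.+1 -> C)
    (Hpsi_irr : forall a, is_irr_char lam (psi a))
    (Hpsi_inj : forall a b, (forall i, psi a i = psi b i) -> a = b)
    (Hpsi_all : forall chi, is_irr_char lam chi ->
                  exists a, forall i, chi i = psi a i)
    (m : 'I_N -> C)
    (Hm : forall i, tau delta i = \sum_a m a * psi a i)
    (a : 'I_N) :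
  in_field_gen (Fchi_gens lam (psi a)) (m a) /\
  (forall (d : nat) (X : 'I_r.+1 -> 'M[C]_d),
     is_rep lam X -> (forall i, \tr (X i) = psi a i) ->
     forall (b : 'I_r.+1) (k : nat),
       in_field_gen (Fchi_gens lam (psi a)) ((char_poly (X b))`_k)).
Proof.
have gl (K : {pred C}) : (forall y, Fchi_gens lam (psi a) y -> y \in K) ->
    forall i j k, lam i j k \in K.
  by move=> Hg i j k; apply: Hg; left; exists i, j, k.
have gp (K : {pred C}) : (forall y, Fchi_gens lam (psi a) y -> y \in K) ->
    forall i, psi a i \in K.
  by move=> Hg i; apply: Hg; right; exists i.
split; last first.
  move=> d X RX TX b k K HK Hg; apply: (charpoly_K HK) => j.
  have [c [cK ->]] := rep_pow HK RX (gl K Hg) b j.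
  rewrite raddf_sum; apply: (Ksum HK) => i _.
  rewrite /= mxtraceZ TX; apply: (KM HK) => //; apply: (gp _ Hg).
move=> K HK Hg.
have Hinv : involutive star by case: HRBA => _ [_ [_ [_ [H _]]]].
have dpos i : 0 < delta i by case: Hdeg => _ [_ [_ H]].
have d0 : delta ord0 = 1 by case: Hdeg.
have dK i : delta i \in K by rewrite -Hstd; apply: gl.
have [d [X [RX [IX TX]]]] := Hpsi_irr a.
set n := \sum_j delta j.
set S := \sum_i (delta i)^-1 * psi a (star i) * psi a i.
have key : m a * S = n * psi a ord0.
  transitivity (\sum_i (delta i)^-1 * tau delta (star i) * psi a i); last first.
    rewrite (bigD1 ord0) //= big1 ?addr0; last first.
      move=> i i0; rewrite /tau -{1}(star0 HRBA) (inj_eq (inv_inj Hinv)).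
      by rewrite (negbTE i0) mulr0 mulr0 mul0r.
    by rewrite /tau (star0 HRBA) eqxx d0 invr1 mul1r mulr1.
  under [RHS]eq_bigr do rewrite Hm mulr_sumr mulr_suml.
  rewrite exchange_big /= (bigD1 a) //= [X in _ + X]big1 ?addr0; last first.
    move=> b ba.
    have [db [Xb [RXb [IXb TXb]]]] := Hpsi_irr b.
    have Hne : ~ (forall j, \tr (Xb j) = \tr (X j)).
      move=> H; move/negP: ba; apply; apply/eqP; apply: Hpsi_inj => i.
      by rewrite TXb TX H.
    have := ortho HRBA Hdeg Hstd RXb RX IXb IX Hne.
    move=> O; rewrite -[RHS](mulr0 (m b)) -[in RHS]O mulr_sumr; apply: eq_bigr => i _; rewrite -TXb -TX; ring.
  rewrite /S mulr_sumr; apply: eq_bigr => i _; ring.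
have p0 : psi a ord0 != 0.
  rewrite TX; case: RX => -> _; rewrite mxtrace1 pnatr_eq0 -lt0n.
  by case: IX.
have nnz : n != 0.
  rewrite /n (bigD1 ord0) //= d0 gt_eqF // ltr_pwDl //.
  by apply: sumr_ge0 => i _; apply: ltW.
have Snz : S != 0.
  apply: contraNneq (mulf_neq0 nnz p0) => S0.
  by rewrite -key S0 mulr0.
have SK : S \in K.
  apply: (Ksum HK) => i _; apply: (KM HK); last by apply: (gp _ Hg).
  by apply: (KM HK); [apply: (KV HK) | apply: (gp _ Hg)].
have nK : n \in K by apply: (Ksum HK).
rewrite -(mulfK Snz (m a)) key.
by apply: (Kdiv HK) => //; apply: (KM HK) => //; apply: (gp _ Hg).
Qed.
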